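(* For every $n\geq1$, $T_n(I-S)=(I-S)W_n$ as operators on $H^2$. Consequently $\mathrm{span}\{(I-S)h_k:k\ge2\}$ is invariant under every $T_n$, and $1-z$ is a cyclic vector for $\{T_n:n\ge1\}$ in $H^2$ (i.e. $\mathrm{span}\{1-z^n:n\ge1\}$ is dense in $H^2$).
   Context: $H^2$ is the Hardy space on the open unit disk. $S$ is the shift operator $Sf(z)=zf(z)$ on $H^2$. $T_nf(z)=f(z^n)$ and $W_nf(z)=\frac{1-z^n}{1-z}f(z^n)$ for $n\ge1$. For $k\geq 2$, $h_k(z)=\frac{1}{1-z}\big(\mathrm{Log}(1-z^k)-\mathrm{Log}(1-z)-\ln k\big)$ with $\mathrm{Log}$ the principal branch. *)

(* Defs.v *)
From Stdlib Require Import Reals.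
Open Scope R_scope.

Definition Cx : Type := (R * R)%type.
Definition Cre (z : Cx) : R := fst z.
Definition Cim (z : Cx) : R := snd z.
Definition RtoC (x : R) : Cx := (x, 0).
Definition Czero : Cx := (0, 0).
Definition Cone : Cx := (1, 0).
Definition Cadd (z w : Cx) : Cx := (fst z + fst w, snd z + snd w).
Definition Copp (z : Cx) : Cx := (- fst z, - snd z).
Definition Csub (z w : Cx) : Cx := Cadd z (Copp w).
Definition Cmul (z w : Cx) : Cx :=
  (fst z * fst w - snd z * snd w, fst z * snd w + snd z * fst w).
Definition Cnorm2 (z : Cx) : R := fst z * fst z + snd z * snd z.
Definition Cabs (z : Cx) : R := sqrt (Cnorm2 z).
Definition Cinv (z : Cx) : Cx := (fst z / Cnorm2 z, - snd z / Cnorm2 z).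
Definition Cdiv (z w : Cx) : Cx := Cmul z (Cinv w).
Fixpoint Cpow (z : Cx) (n : nat) : Cx :=
  match n with O => Cone | S m => Cmul z (Cpow z m) end.

(* principal argument, in (-PI, PI] (value at 0 is irrelevant) *)
Definition Arg (z : Cx) : R :=
  let x := fst z in let y := snd z in
  if Rlt_dec 0 x then atan (y / x)
  else if Rlt_dec x 0 then
         (if Rle_dec 0 y then atan (y / x) + PI else atan (y / x) - PI)
  else if Rlt_dec 0 y then PI / 2
  else if Rlt_dec y 0 then - (PI / 2) else 0.
Definition CLog (z : Cx) : Cx := (ln (Cabs z), Arg z).

Definition in_disk (z : Cx) : Prop := Cabs z < 1.

Fixpoint Csum (u : nat -> Cx) (N : nat) : Cx :=
  match N with O => u O | S M => Cadd (Csum u M) (u N) end.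

Definition Cseries_cv (u : nat -> Cx) (l : Cx) : Prop :=
  Un_cv (fun N => fst (Csum u N)) (fst l) /\ Un_cv (fun N => snd (Csum u N)) (snd l).

Definition represents (a : nat -> Cx) (f : Cx -> Cx) : Prop :=
  forall z, in_disk z -> Cseries_cv (fun n => Cmul (a n) (Cpow z n)) (f z).

Definition square_summable_to (a : nat -> Cx) (L : R) : Prop :=
  Un_cv (fun N => sum_f_R0 (fun n => Cnorm2 (a n)) N) L.

Definition H2 (f : Cx -> Cx) : Prop :=
  exists a L, represents a f /\ square_summable_to a L.

Definition H2_norm_sq_lt (f : Cx -> Cx) (r : R) : Prop :=
  exists a L, represents a f /\ square_summable_to a L /\ L < r.

(* equality of functions on the disk (elements of H^2 live on the disk) *)
Definition eq_on_disk (f g : Cx -> Cx) : Prop :=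
  forall z, in_disk z -> f z = g z.

Definition Id_op (f : Cx -> Cx) : Cx -> Cx := f.
Definition S_op (f : Cx -> Cx) : Cx -> Cx := fun z => Cmul z (f z).
Definition I_minus_S (f : Cx -> Cx) : Cx -> Cx := fun z => Csub (f z) (S_op f z).
Definition T_op (n : nat) (f : Cx -> Cx) : Cx -> Cx := fun z => f (Cpow z n).
Definition W_op (n : nat) (f : Cx -> Cx) : Cx -> Cx :=
  fun z => Cmul (Cdiv (Csub Cone (Cpow z n)) (Csub Cone z)) (f (Cpow z n)).

Definition h (k : nat) : Cx -> Cx :=
  fun z => Cdiv (Csub (Csub (CLog (Csub Cone (Cpow z k))) (CLog (Csub Cone z)))
                      (RtoC (ln (INR k))))
                (Csub Cone z).

Definition in_span (P : nat -> Prop) (F : nat -> Cx -> Cx) (g : Cx -> Cx) : Prop :=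
  exists (N : nat) (c : nat -> Cx),
    (forall k, (k <= N)%nat -> ~ P k -> c k = Czero) /\
    eq_on_disk g (fun z => Csum (fun k => Cmul (c k) (F k z)) N).

Definition dense_in_H2 (M : (Cx -> Cx) -> Prop) : Prop :=
  forall f, H2 f -> forall eps, 0 < eps ->
    exists g, M g /\ H2_norm_sq_lt (fun z => Csub (f z) (g z)) (eps * eps).

(* Main.v *)
Require Import Defs.
From Stdlib Require Import Reals Lra Lia Psatz.
Open Scope R_scope.

Lemma Cx_eq (z w : Cx) : fst z = fst w -> snd z = snd w -> z = w.
Proof. destruct z, w; simpl; intros; subst; reflexivity. Qed.

Lemma Cnorm2_ge0 z : 0 <= Cnorm2 z.
Proof. unfold Cnorm2; nra. Qed.

Lemma Cnorm2_mul z w : Cnorm2 (Cmul z w) = Cnorm2 z * Cnorm2 w.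
Proof. destruct z, w; unfold Cnorm2, Cmul; simpl; ring. Qed.

Lemma Cnorm2_pow z n : Cnorm2 (Cpow z n) = Cnorm2 z ^ n.
Proof. induction n; simpl. unfold Cnorm2, Cone; simpl; ring.
rewrite Cnorm2_mul, IHn; ring. Qed.

Lemma in_disk_iff z : in_disk z <-> Cnorm2 z < 1.
Proof. unfold in_disk, Cabs. split; intro H.
- destruct (Rlt_le_dec (Cnorm2 z) 1) as [h|h]; auto.
  apply sqrt_le_1_alt in h. rewrite sqrt_1 in h. lra.
- rewrite <- sqrt_1. apply sqrt_lt_1_alt. split; auto using Cnorm2_ge0.
Qed.

Lemma in_disk_pow z n : in_disk z -> (1 <= n)%nat -> in_disk (Cpow z n).
Proof. rewrite !in_disk_iff, Cnorm2_pow. intros. apply pow_lt_1_compat; auto.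
split; auto using Cnorm2_ge0. Qed.

Lemma in_disk_ne1 z : in_disk z -> Cnorm2 (Csub Cone z) <> 0.
Proof. rewrite in_disk_iff. destruct z as [x y]; unfold Cnorm2, Csub, Cadd, Copp, Cone; simpl.
intros H E. assert (1 + - x = 0) by nra. assert (0 + - y = 0) by nra. nra. Qed.

Lemma part1 : forall n : nat, (1 <= n)%nat ->
     forall f, H2 f ->
       eq_on_disk (T_op n (I_minus_S f)) (I_minus_S (W_op n f)).
Proof.
intros n _ f _ z Hz. pose proof (in_disk_ne1 z Hz) as Hn.
unfold T_op, I_minus_S, W_op, S_op, Cdiv.
destruct (Cpow z n) as [p1 p2]. destruct (f (p1,p2)) as [f1 f2].
destruct z as [z1 z2]. revert Hn.
unfold Cnorm2, Csub, Cadd, Copp, Cone, Cmul, Cinv; simpl. intro Hn.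
apply Cx_eq; simpl; unfold Cnorm2; simpl; field; rewrite Rplus_0_l in Hn; exact Hn.
Qed.

Lemma Csum_fst u N : fst (Csum u N) = sum_f_R0 (fun k => fst (u k)) N.
Proof. induction N; simpl; auto. rewrite IHN; reflexivity. Qed.
Lemma Csum_snd u N : snd (Csum u N) = sum_f_R0 (fun k => snd (u k)) N.
Proof. induction N; simpl; auto. rewrite IHN; reflexivity. Qed.

Lemma Csum_ext u v N : (forall k, (k <= N)%nat -> u k = v k) -> Csum u N = Csum v N.
Proof. induction N; simpl; intros H. apply H; lia.
rewrite IHN by (intros; apply H; lia). rewrite H by lia. reflexivity. Qed.

Lemma Csum_add u v N : Csum (fun k => Cadd (u k) (v k)) N = Cadd (Csum u N) (Csum v N).
Proof. apply Cx_eq; rewrite ?Csum_fst, ?Csum_snd; simpl; rewrite ?Csum_fst, ?Csum_snd;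
 apply plus_sum. Qed.

Lemma Csum_opp u N : Csum (fun k => Copp (u k)) N = Copp (Csum u N).
Proof. apply Cx_eq; rewrite ?Csum_fst, ?Csum_snd; simpl; rewrite ?Csum_fst, ?Csum_snd;
 induction N; simpl; try rewrite IHN; ring. Qed.

Lemma Csum_trunc u N1 N : (N1 <= N)%nat -> (forall k, (N1 < k)%nat -> u k = Czero) ->
  Csum u N = Csum u N1.
Proof. intros H Hz. induction N. replace N1 with 0%nat by lia; reflexivity.
destruct (Nat.eq_dec N1 (S N)). subst; reflexivity.
simpl. rewrite IHN by lia. rewrite Hz by lia. apply Cx_eq; simpl; ring. Qed.

Lemma in_span_ext P F g1 g2 : eq_on_disk g1 g2 -> in_span P F g1 -> in_span P F g2.
Proof. intros E [N [c [H1 H2]]]. exists N, c; split; auto.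
intros z Hz; rewrite <- E; auto. Qed.

Lemma in_span_zero P F : in_span P F (fun _ => Czero).
Proof. exists 0%nat, (fun _ => Czero); split; auto. intros z _; apply Cx_eq; simpl; ring. Qed.

Lemma Csum_zero N : Csum (fun _ => Czero) N = Czero.
Proof. induction N; cbn [Csum]; auto. rewrite IHN; apply Cx_eq; simpl; ring. Qed.

Lemma in_span_single P F j a : P j -> in_span P F (fun z => Cmul a (F j z)).
Proof. intros Pj. exists j, (fun k => if Nat.eq_dec k j then a else Czero). split.
- intros k _ nP. destruct (Nat.eq_dec k j); subst; tauto.
- intros z _. destruct j.
  + cbn [Csum]. destruct (Nat.eq_dec 0 0); [reflexivity|lia].
  + cbn [Csum]. destruct (Nat.eq_dec (S j) (S j)); [|lia].
    rewrite (Csum_ext _ (fun _ => Czero)), Csum_zero. apply Cx_eq; simpl; ring.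
    intros k Hk; destruct (Nat.eq_dec k (S j)); [lia|]. apply Cx_eq; simpl; ring.
Qed.

Lemma in_span_add P F g1 g2 : in_span P F g1 -> in_span P F g2 ->
  in_span P F (fun z => Cadd (g1 z) (g2 z)).
Proof. intros [N1 [c1 [H1 E1]]] [N2 [c2 [H2 E2]]].
set (c1' := fun k => if Compare_dec.le_lt_dec k N1 then c1 k else Czero).
set (c2' := fun k => if Compare_dec.le_lt_dec k N2 then c2 k else Czero).
exists (N1 + N2)%nat, (fun k => Cadd (c1' k) (c2' k)). split.
- intros k Hk nP. unfold c1', c2'.
  destruct (Compare_dec.le_lt_dec k N1), (Compare_dec.le_lt_dec k N2); rewrite ?H1, ?H2 by auto;
  apply Cx_eq; simpl; ring.
- intros z Hz. rewrite E1, E2 by auto. symmetry.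
  rewrite (Csum_ext _ (fun k => Cadd (Cmul (c1' k) (F k z)) (Cmul (c2' k) (F k z)))).
  2:{ intros; apply Cx_eq; simpl; ring. }
  rewrite Csum_add. f_equal.
  + rewrite (Csum_trunc _ N1) by (lia || (intros k Hk; unfold c1'; destruct (Compare_dec.le_lt_dec k N1); [lia|]; apply Cx_eq; simpl; ring)).
    apply Csum_ext; intros k Hk; unfold c1'; destruct (Compare_dec.le_lt_dec k N1); [reflexivity|lia].
  + rewrite (Csum_trunc _ N2) by (lia || (intros k Hk; unfold c2'; destruct (Compare_dec.le_lt_dec k N2); [lia|]; apply Cx_eq; simpl; ring)).
    apply Csum_ext; intros k Hk; unfold c2'; destruct (Compare_dec.le_lt_dec k N2); [reflexivity|lia].
Qed.

Definition X (k : nat) (z : Cx) : Cx :=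
  Csub (Csub (CLog (Csub Cone (Cpow z k))) (CLog (Csub Cone z))) (RtoC (ln (INR k))).

Lemma G_X k z : in_disk z -> I_minus_S (h k) z = X k z.
Proof. intro Hz. pose proof (in_disk_ne1 z Hz) as Hn.
unfold I_minus_S, S_op, h, X, Cdiv.
destruct (Csub (Csub (CLog (Csub Cone (Cpow z k))) (CLog (Csub Cone z))) (RtoC (ln (INR k)))) as [x1 x2].
destruct z as [z1 z2]. revert Hn.
unfold Cnorm2, Csub, Cadd, Copp, Cone, Cmul, Cinv; simpl. intro Hn.
rewrite Rplus_0_l in Hn.
apply Cx_eq; simpl; unfold Cnorm2; simpl; field; exact Hn.
Qed.

Lemma Cmul_assoc a b c : Cmul a (Cmul b c) = Cmul (Cmul a b) c.
Proof. apply Cx_eq; simpl; ring. Qed.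

Lemma Cpow_add z a b : Cpow z (a + b) = Cmul (Cpow z a) (Cpow z b).
Proof. induction a; simpl. apply Cx_eq; simpl; ring.
rewrite IHa, Cmul_assoc. reflexivity. Qed.

Lemma Cpow_mul z n k : Cpow (Cpow z n) k = Cpow z (n * k).
Proof. induction k; simpl. rewrite Nat.mul_0_r; reflexivity.
rewrite IHk, <- Cpow_add. f_equal; lia. Qed.

Lemma X_pow n k z : (1 <= n)%nat -> (1 <= k)%nat ->
  X k (Cpow z n) = Csub (X (n * k) z) (X n z).
Proof. intros Hn Hk. unfold X. rewrite Cpow_mul.
rewrite mult_INR, ln_mult by (apply lt_0_INR; lia).
destruct (CLog (Csub Cone (Cpow z (n * k)))) as [a1 a2].
destruct (CLog (Csub Cone (Cpow z n))) as [b1 b2].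
destruct (CLog (Csub Cone z)) as [c1 c2].
apply Cx_eq; unfold Csub, Cadd, Copp, RtoC; simpl; ring.
Qed.

Lemma Cpow_1 z : Cpow z 1 = z.
Proof. apply Cx_eq; simpl; ring. Qed.

Lemma part2 : forall n : nat, (1 <= n)%nat ->
     forall g, in_span (fun k => (2 <= k)%nat) (fun k => I_minus_S (h k)) g ->
       in_span (fun k => (2 <= k)%nat) (fun k => I_minus_S (h k)) (T_op n g).
Proof.
intros n Hn g Hg.
destruct (Nat.eq_dec n 1) as [->|Hn2].
{ eapply in_span_ext; [|exact Hg]. intros z _. unfold T_op. rewrite Cpow_1; reflexivity. }
destruct Hg as [N [c [Hc E]]].
apply in_span_ext with (fun z => Csum (fun k => Cmul (c k) (I_minus_S (h k) (Cpow z n))) N).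
{ intros z Hz. unfold T_op. rewrite E by (apply in_disk_pow; auto). reflexivity. }
assert (forall M, (M <= N)%nat -> in_span (fun k => (2 <= k)%nat) (fun k => I_minus_S (h k))
   (fun z => Csum (fun k => Cmul (c k) (I_minus_S (h k) (Cpow z n))) M)) as HM.
2: apply HM; lia.
assert (Ht : forall k, (k <= N)%nat -> in_span (fun k => (2 <= k)%nat) (fun k => I_minus_S (h k))
   (fun z => Cmul (c k) (I_minus_S (h k) (Cpow z n)))).
{ intros k Hk. destruct (Compare_dec.le_lt_dec 2 k) as [H2|H2].
  - apply in_span_ext with (fun z => Cadd (Cmul (c k) (I_minus_S (h (n*k)) z))
                                          (Cmul (Copp (c k)) (I_minus_S (h n) z))).
    + intros z Hz. rewrite !G_X by (auto; apply in_disk_pow; auto).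
      rewrite X_pow by lia. apply Cx_eq; unfold Csub, Cadd, Copp, Cmul; simpl; ring.
    + apply in_span_add; [apply (in_span_single _ (fun k => I_minus_S (h k)) (n*k)) | apply (in_span_single _ (fun k => I_minus_S (h k)) n)]; lia.
  - rewrite Hc by lia. apply in_span_ext with (fun _ => Czero).
    intros z _; apply Cx_eq; simpl; ring. apply in_span_zero. }
induction M; intros HM.
- apply Ht; lia.
- cbn [Csum]. apply in_span_add. apply IHM; lia. apply Ht; lia.
Qed.

Lemma Un_cv_eventually u v l : Un_cv u l -> (exists K, forall m, (K <= m)%nat -> v m = u m) -> Un_cv v l.
Proof. intros H [K HK] eps Heps. destruct (H eps Heps) as [N HN].
exists (max N K). intros m Hm. rewrite HK by lia. apply HN; lia. Qed.

Lemma Un_cv_const x : Un_cv (fun _ => x) x.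
Proof. intros eps Heps. exists 0%nat. intros. unfold R_dist. rewrite Rminus_diag, Rabs_R0. lra. Qed.

Lemma sum_diff f g K m : (forall n, (K < n)%nat -> f n = g n) -> (K <= m)%nat ->
  sum_f_R0 f m = sum_f_R0 g m - sum_f_R0 g K + sum_f_R0 f K.
Proof. intros H Hm. induction m. replace K with 0%nat by lia. ring.
destruct (Nat.eq_dec K (S m)). subst. ring.
simpl. rewrite IHm by lia. rewrite (H (S m)) by lia. ring. Qed.

Definition F1 : nat -> Cx -> Cx := fun n => T_op n (fun z => Csub Cone z).

Lemma span_poly e K : Csum e K = Czero ->
  in_span (fun n => (1 <= n)%nat) F1 (fun z => Csum (fun n => Cmul (e n) (Cpow z n)) K).
Proof. intros He. exists K, (fun k => if Nat.eq_dec k 0 then Czero else Copp (e k)). split.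
- intros k _ Hk. destruct (Nat.eq_dec k 0); [reflexivity| lia].
- intros z _. unfold F1, T_op. symmetry.
  rewrite (Csum_ext _ (fun k => Cadd (Cmul (e k) (Cpow z k)) (Copp (e k)))).
  + rewrite Csum_add, Csum_opp, He. apply Cx_eq; simpl; ring.
  + intros k _. destruct (Nat.eq_dec k 0). subst. apply Cx_eq; simpl; ring.
    apply Cx_eq; simpl; ring.
Qed.

Lemma Csum_sub_mul a e P m :
  Csum (fun n => Cmul (Csub (a n) (e n)) (P n)) m =
  Csub (Csum (fun n => Cmul (a n) (P n)) m) (Csum (fun n => Cmul (e n) (P n)) m).
Proof. rewrite (Csum_ext _ (fun n => Cadd (Cmul (a n) (P n)) (Copp (Cmul (e n) (P n))))).
rewrite Csum_add, Csum_opp. reflexivity.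
intros; apply Cx_eq; simpl; ring. Qed.

Lemma part4 : dense_in_H2 (in_span (fun n => (1 <= n)%nat) (fun n => T_op n (fun z => Csub Cone z))).
Proof.
intros f [a [La [Hrep Hsq]]] eps Heps.
set (e2 := eps * eps). assert (He2 : 0 < e2) by (unfold e2; nra).
set (sa := fun m => sum_f_R0 (fun n => Cnorm2 (a n)) m).
assert (Hgrow : Un_growing sa).
{ intro m. unfold sa. simpl. pose proof (Cnorm2_ge0 (a (S m))). lra. }
assert (HsaL : forall m, sa m <= La) by (apply growing_ineq; auto).
destruct (Hsq (e2/4)) as [N HN]. lra.
assert (HLN : La - sa N < e2/4).
{ specialize (HN N (le_n _)). unfold R_dist in HN. apply Rabs_def2 in HN. unfold sa. lra. }
set (c := Csum a N).
assert (Hcn := Cnorm2_ge0 c).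
destruct (archimed_cor1 (e2 / (4 * (Cnorm2 c + 1)))) as [M [HM1 HM0]].
{ apply Rdiv_lt_0_compat; lra. }
assert (HMpos : 0 < INR M) by (apply lt_0_INR; lia).
set (cM := Cmul c (RtoC (/ INR M))).
set (K := (N + M)%nat).
set (e := fun n => if Compare_dec.le_lt_dec n N then a n
                   else if Compare_dec.le_lt_dec n K then Copp cM else Czero).
exists (fun z => Csum (fun n => Cmul (e n) (Cpow z n)) K). split.
{ apply span_poly.
  assert (Hsplit : forall (u : nat -> R), sum_f_R0 u K =
          sum_f_R0 u N + sum_f_R0 (fun i => u (S N + i)%nat) (M - 1)).
  { intro u. rewrite (tech2 u N K) by (unfold K; lia). f_equal. f_equal. unfold K; lia. }
  assert (HMe : INR (S (M - 1)) = INR M) by (f_equal; lia).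
  apply Cx_eq; rewrite ?Csum_fst, ?Csum_snd; rewrite Hsplit;
  rewrite (sum_eq _ (fun n => _ (a n)) N)
     by (intros i Hi; unfold e; destruct (Compare_dec.le_lt_dec i N); [reflexivity|lia]).
  - rewrite (sum_eq _ (fun _ => - fst cM) (M - 1)).
    rewrite sum_cte, HMe, <- Csum_fst. fold c. unfold cM; simpl. field. lra.
    intros i Hi; unfold e; destruct (Compare_dec.le_lt_dec (S N + i) N); [lia|].
    destruct (Compare_dec.le_lt_dec (S N + i) K); [reflexivity|unfold K in *; lia].
  - rewrite (sum_eq _ (fun _ => - snd cM) (M - 1)).
    rewrite sum_cte, HMe, <- Csum_snd. fold c. unfold cM; simpl. field. lra.
    intros i Hi; unfold e; destruct (Compare_dec.le_lt_dec (S N + i) N); [lia|].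
    destruct (Compare_dec.le_lt_dec (S N + i) K); [reflexivity|unfold K in *; lia]. }
set (b := fun n => Csub (a n) (e n)).
set (sb := fun m => sum_f_R0 (fun n => Cnorm2 (b n)) m).
assert (Hbig : forall n, (K < n)%nat -> Cnorm2 (b n) = Cnorm2 (a n)).
{ intros n Hn. unfold b, e. destruct (Compare_dec.le_lt_dec n N); [unfold K in *; lia|].
  destruct (Compare_dec.le_lt_dec n K); [lia|]. unfold Cnorm2; simpl; ring. }
exists b, (La - sa K + sb K). split; [|split].
- intros z Hz. destruct (Hrep z Hz) as [H1 H2].
  assert (Hev : forall m, (K <= m)%nat ->
    Csum (fun n => Cmul (b n) (Cpow z n)) m =
    Csub (Csum (fun n => Cmul (a n) (Cpow z n)) m) (Csum (fun n => Cmul (e n) (Cpow z n)) K)).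
  { intros m Hm. unfold b. rewrite Csum_sub_mul. f_equal. apply Csum_trunc; auto.
    intros k Hk. unfold e. destruct (Compare_dec.le_lt_dec k N); [unfold K in *; lia|].
    destruct (Compare_dec.le_lt_dec k K); [lia|]. apply Cx_eq; simpl; ring. }
  split.
  + eapply Un_cv_eventually.
    * apply (CV_minus _ _ _ _ H1 (Un_cv_const (fst (Csum (fun n => Cmul (e n) (Cpow z n)) K)))).
    * exists K. intros m Hm. rewrite Hev by auto. unfold Csub, Cadd, Copp; simpl. ring.
  + eapply Un_cv_eventually.
    * apply (CV_minus _ _ _ _ H2 (Un_cv_const (snd (Csum (fun n => Cmul (e n) (Cpow z n)) K)))).
    * exists K. intros m Hm. rewrite Hev by auto. unfold Csub, Cadd, Copp; simpl. ring.
- eapply Un_cv_eventually.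
  + apply (CV_plus _ _ _ _ (CV_minus _ _ _ _ Hsq (Un_cv_const (sa K))) (Un_cv_const (sb K))).
  + exists K. intros m Hm. unfold sb, sa. apply sum_diff; auto.
-
  assert (HsbK : sb K <= 2 * (sa K - sa N) + 2 * Cnorm2 cM * INR M).
  { unfold sb. rewrite (tech2 _ N K) by (unfold K; lia).
    rewrite (sum_eq _ (fun _ => 0) N).
    2:{ intros i Hi. unfold b, e. destruct (Compare_dec.le_lt_dec i N); [|lia].
        unfold Cnorm2; simpl; ring. }
    rewrite sum_cte, Rmult_0_l, Rplus_0_l.
    eapply Rle_trans.
    apply (sum_Rle _ (fun i => 2 * Cnorm2 (a (S N + i)%nat) + 2 * Cnorm2 cM)).
    { intros i Hi. unfold b, e. destruct (Compare_dec.le_lt_dec (S N + i) N); [lia|].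
      destruct (Compare_dec.le_lt_dec (S N + i) K); [|unfold K in *; lia].
      destruct (a (S N + i)%nat) as [x1 x2]. destruct cM as [y1 y2].
      unfold Cnorm2; simpl. rewrite !Ropp_involutive. pose proof (pow2_ge_0 (x1 - y1)); pose proof (pow2_ge_0 (x2 - y2)). nra. }
    rewrite plus_sum, sum_cte.
    assert (Hs : sum_f_R0 (fun i => 2 * Cnorm2 (a (S N + i)%nat)) (K - S N) = 2 * (sa K - sa N)).
    { unfold sa. rewrite (tech2 (fun n => Cnorm2 (a n)) N K) by (unfold K; lia).
      replace (sum_f_R0 (fun n : nat => Cnorm2 (a n)) N +
   sum_f_R0 (fun i : nat => Cnorm2 (a (S N + i)%nat)) (K - S N) -
   sum_f_R0 (fun n : nat => Cnorm2 (a n)) N) with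
   (sum_f_R0 (fun i : nat => Cnorm2 (a (S N + i)%nat)) (K - S N)) by ring.
      rewrite scal_sum. apply sum_eq. intros; ring. }
    rewrite Hs. replace (S (K - S N)) with M by (unfold K; lia). lra. }
  assert (HcM : Cnorm2 cM * INR M = Cnorm2 c * / INR M).
  { unfold cM, Cnorm2; simpl. field. lra. }
  assert (Hy : (Cnorm2 c + 1) * / INR M < e2 / 4).
  { apply Rmult_lt_compat_l with (r := Cnorm2 c + 1) in HM1; [|lra].
    replace ((Cnorm2 c + 1) * (e2 / (4 * (Cnorm2 c + 1)))) with (e2/4) in HM1 by (field; lra).
    lra. }
  assert (Hy0 : 0 < / INR M) by (apply Rinv_0_lt_compat; lra).
  specialize (HsaL K).
  assert (Cnorm2 c * / INR M <= (Cnorm2 c + 1) * / INR M) by nra.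
  lra.
Qed.

Theorem mainTheorem7 :
  (* T_n (I - S) = (I - S) W_n on H^2, for every n >= 1 *)
  (forall n : nat, (1 <= n)%nat ->
     forall f, H2 f ->
       eq_on_disk (T_op n (I_minus_S f)) (I_minus_S (W_op n f))) /\
  (* span{(I - S) h_k : k >= 2} is invariant under every T_n *)
  (forall n : nat, (1 <= n)%nat ->
     forall g, in_span (fun k => (2 <= k)%nat) (fun k => I_minus_S (h k)) g ->
       in_span (fun k => (2 <= k)%nat) (fun k => I_minus_S (h k)) (T_op n g)) /\
  (* 1 - z is cyclic for {T_n : n >= 1}: span{T_n (1 - z)} = span{1 - z^n} is dense *)
  (forall n : nat, eq_on_disk (T_op n (fun z => Csub Cone z)) (fun z => Csub Cone (Cpow z n))) /\
  dense_in_H2 (in_span (fun n => (1 <= n)%nat) (fun n => T_op n (fun z => Csub Cone z))).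
Proof.
split; [exact part1|]. split; [exact part2|]. split; [|exact part4].
intros n z _; reflexivity.
Qed.
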